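(* Let $K$ be an arbitrary field, $n\ge1$, and let $\mathcal J\subset A$ be the ideal generated by $T_1,\dots,T_n$ and the entries of $\Phi^2$. Then for all $1\le p\le n$, $1\le r\le p$, and all $a_1,\dots,a_{p-r},b_1,\dots,b_{p-r}\in[1,n]$, the polynomial $$\mathrm{Rel}(r,p)=\sum_{1\le i_1<\dots<i_r\le n}M(a_1,\dots,a_{p-r},i_1,\dots,i_r;\,b_1,\dots,b_{p-r},i_1,\dots,i_r)$$ lies in $\mathcal J$.
   Context: $A=K[\Phi_{a,b}:1\le a,b\le n]$ with generic matrix $\Phi=(\Phi_{a,b})$. $M(a_1,\dots,a_s;b_1,\dots,b_s)=\det(\Phi_{a_k,b_l})_{1\le k,l\le s}$ for index sequences in $[1,n]$ (zero if an index repeats). $T_i$ is the sum of the principal $i\times i$ minors of $\Phi$. *)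

(* Defs.v *)
From HB Require Import structures.
From mathcomp Require Import all_boot all_order all_algebra.
From mathcomp Require Import mpoly.
Set Implicit Arguments. Unset Strict Implicit. Unset Printing Implicit Defensive.
Import GRing.Theory.
Local Open Scope ring_scope.

(* A = K[Phi_{a,b}] is {mpoly K[n*n]}; indices [1,n] are rendered as 'I_n (0-based). *)

Definition Phi (K : fieldType) (n : nat) : 'M[{mpoly K[n * n]}]_n :=
  \matrix_(a < n, b < n) 'X_(mxvec_index a b).

Definition minorM (K : fieldType) (n s : nat) (a b : s.-tuple 'I_n)
  : {mpoly K[n * n]} :=
  \det (\matrix_(k < s, l < s) Phi K n (tnth a k) (tnth b l)).

Definition incr (n r : nat) (t : r.-tuple 'I_n) : bool :=
  sorted (fun x y : 'I_n => (x < y)%N) t.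

Definition Tsum (K : fieldType) (n i : nat) : {mpoly K[n * n]} :=
  \sum_(t : i.-tuple 'I_n | incr t) minorM K t t.

Definition Rel (K : fieldType) (n r p : nat) (a b : (p - r).-tuple 'I_n)
  : {mpoly K[n * n]} :=
  \sum_(t : r.-tuple 'I_n | incr t) minorM K (cat_tuple a t) (cat_tuple b t).

Definition in_ideal (R : comPzRingType) (gens : seq R) (f : R) : Prop :=
  exists c : seq R, f = \sum_(i < size gens) c`_i * gens`_i.

Definition Jgens (K : fieldType) (n : nat) : seq {mpoly K[n * n]} :=
  [seq Tsum K n i | i <- iota 1 n] ++
  [seq (Phi K n *m Phi K n) ij.1 ij.2 | ij <- enum {: 'I_n * 'I_n}].

(* Main.v *)
Require Import Defs.
From HB Require Import structures.
From mathcomp Require Import all_boot all_order all_algebra.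
From mathcomp Require Import mpoly.
From mathcomp Require Import perm.
From mathcomp Require Import ring zify.
Import GRing.Theory.
Local Open Scope ring_scope.

Module Aux.
Set Implicit Arguments. Unset Strict Implicit. Unset Printing Implicit Defensive.
Section Cong.
Variable R : comPzRingType.
Variable I : R -> Prop.
Hypothesis I0 : I 0.
Hypothesis ID : forall x y, I x -> I y -> I (x + y).
Hypothesis IM : forall c x, I x -> I (c * x).

Lemma IN x : I x -> I (- x).
Proof. by move=> h; rewrite -mulN1r; apply: IM. Qed.

Lemma Isum (J : Type) (r : seq J) (P : pred J) (F : J -> R) :
  (forall j, P j -> I (F j)) -> I (\sum_(j <- r | P j) F j).
Proof. by move=> h; elim/big_rec: _ => // j x Pj Ix; apply: ID => //; apply: h. Qed.

Lemma prod_cong (J : Type) (r : seq J) (P : pred J) (F G : J -> R) :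
  (forall j, P j -> I (F j - G j)) ->
  I (\prod_(j <- r | P j) F j - \prod_(j <- r | P j) G j).
Proof.
move=> h; elim/big_rec2: _ => [|j y x Pj Ixy]; first by rewrite subrr.
have -> : F j * x - G j * y = F j * (x - y) + (F j - G j) * y by ring.
by apply: ID; [apply: IM | rewrite mulrC; apply: IM; apply: h].
Qed.

Lemma det_cong k (A B : 'M[R]_k) : (forall i j, I (A i j - B i j)) ->
  I (\det A - \det B).
Proof.
move=> h; rewrite /(\det A) /(\det B) -sumrB; apply: Isum => s _.
rewrite -mulrBr; apply: IM; exact: prod_cong.
Qed.
End Cong.

Definition ltord K := fun x y : 'I_K => (x < y)%N.

Lemma ltord_tr K : transitive (@ltord K).
Proof. by move=> x y z; rewrite /ltord; apply: ltn_trans. Qed.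
Lemma ltord_irr K : irreflexive (@ltord K).
Proof. by move=> x; rewrite /ltord ltnn. Qed.

Lemma sorted_enum_ord K : sorted (@ltord K) (enum 'I_K).
Proof.
have := iota_ltn_sorted 0 K; rewrite -val_enum_ord sorted_map.
by apply: sub_sorted.
Qed.

Lemma incr_id K (h : 'I_K -> 'I_K) :
  (forall x y : 'I_K, (x < y)%N -> (h x < h y)%N) -> (forall i, i \in codom h) -> h =1 id.
Proof.
move=> hi hs.
have e : map h (enum 'I_K) = enum 'I_K.
  apply: (irr_sorted_eq (@ltord_tr K) (@ltord_irr K)).
  - by apply: homo_sorted; [exact: hi| exact: sorted_enum_ord].
  - exact: sorted_enum_ord.
  by move=> i; rewrite mem_enum -codomE hs.
move=> i; have := congr1 (fun s => nth i s i) e.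
rewrite (nth_map i) ?size_enum_ord ?ltn_ord //.
have -> : nth i (enum 'I_K) i = i.
  by apply: val_inj; rewrite /= nth_enum_ord.
by [].
Qed.

Lemma lift_ltn K (i : 'I_K.+1) (x y : 'I_K) : (lift i x < lift i y)%N = (x < y)%N.
Proof. rewrite /= /bump; case: (leqP i x); case: (leqP i y); lia. Qed.

Section Unit.
Variable R : comNzRingType.

Definition unitrows K (X : 'M[R]_K) (f : {ffun 'I_K -> bool}) : 'M[R]_K :=
  \matrix_(i, j) if f i then (i == j)%:R else X i j.

Lemma det_unitrows c K (X : 'M[R]_K) (f : {ffun 'I_K -> bool}) k (h : 'I_k -> 'I_K) :
  #|[set i | f i]| = c ->
  (forall x y : 'I_k, (x < y)%N -> (h x < h y)%N) -> (forall i, f i = (i \notin codom h)) ->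
  \det (unitrows X f) = \det (mxsub h h X).
Proof.
elim: c K X f k h => [|c IH] K X f k h cf hi hf.
  have f0 : forall i, f i = false.
    by move=> i; apply/negP => fi; move/eqP: cf; rewrite cards_eq0 => /eqP/setP/(_ i); rewrite !inE fi.
  have hs : forall i, i \in codom h by move=> i; have := hf i; rewrite f0 => /esym/negbFE.
  have hinj : injective h.
    move=> x y e; apply: val_inj => /=; case: (ltngtP x y) => // xy.
      by have := hi _ _ xy; rewrite e ltnn.
    by have := hi _ _ xy; rewrite e ltnn.
  have ek : k = K.
    have e1 := card_codom hinj; rewrite card_ord in e1.
    rewrite -e1 -[RHS](card_ord K).
    by apply: eq_card => i; rewrite hs.
  subst k; have hid := incr_id hi hs.
  have -> : unitrows X f = X by apply/matrixP => i j; rewrite mxE f0.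
  by congr (\det _); apply/matrixP => i j; rewrite mxE !hid.
have [i0 fi0] : exists i0, f i0.
  apply/existsP; apply: contraT; rewrite negb_exists => /forallP nf.
  have e0 : [set i | f i] = set0 by apply/setP => i; rewrite !inE (negbTE (nf i)).
  by move: cf; rewrite e0 cards0.
move: K X f h i0 cf hf hi fi0; case=> [|K] X f h i0 cf hf hi fi0; first by case: i0 fi0.
have hne : forall x, i0 != h x.
  by move=> x; apply: (contraTneq _ fi0) => ->; rewrite hf codom_f.
have /all_sig [h' hh'] : forall x, {y | h x = lift i0 y}.
  by move=> x; case: (unlift_some (hne x)) => y -> _; exists y.
pose f' := [ffun x => f (lift i0 x)].
pose X' := row' i0 (col' i0 X).
have -> : \det (unitrows X f) = \det (unitrows X' f').
  rewrite (expand_det_row _ i0) (bigD1 i0) //= big1 ?addr0; last first.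
    by move=> j nj; rewrite mxE fi0 eq_sym (negbTE nj) mul0r.
  rewrite mxE fi0 eqxx mul1r /cofactor -signr_odd addnn odd_double expr0 mul1r.
  congr (\det _); apply/matrixP => x y; rewrite !mxE ffunE.
  by case: (f (lift i0 x)) => //; rewrite (inj_eq (@lift_inj _ i0)).
have -> : mxsub h h X = mxsub h' h' X'.
  by apply/matrixP => x y; rewrite !mxE !hh'.
apply: (IH _ _ _ _ _ _ _ _).
- have e : [set i | f i] = i0 |: [set lift i0 x | x in [set x | f' x]].
    apply/setP => i; rewrite !inE; case: (eqVneq i0 i) => [<-|ne]; first by rewrite fi0.
    case: (unlift_some ne) => y -> _ /=.
    by rewrite (mem_imset _ _ (@lift_inj _ i0)) inE ffunE.
  move: cf; rewrite e cardsU1 card_imset; last exact: lift_inj.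
  have -> : i0 \notin [set lift i0 x | x in [set x | f' x]].
    by apply/imsetP => -[x _ /eqP]; rewrite (negbTE (neq_lift _ _)).
  by move=> [].
- by move=> x y xy; rewrite -(lift_ltn i0) -!hh'; apply: hi.
move=> x; rewrite ffunE hf; congr negb.
apply/codomP/codomP => [[y]|[y ->]]; last by exists y; rewrite hh'.
by rewrite hh' => /lift_inj ->; exists y.
Qed.
Lemma det_expand K (X : 'M[R]_K) (d : 'I_K -> bool) :
  \det (map_mx polyC X + \matrix_(i, j) ((d i && (i == j))%:R * 'X)) =
  \sum_(f : {ffun 'I_K -> bool} | [forall i, f i ==> d i])
     'X^(#|[set i | f i]|) * (\det (unitrows X f))%:P.
Proof.
rewrite /(\det (_ + _)).
under eq_bigr => s _.
  rewrite (eq_bigr (fun i => \sum_(b : bool)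
     (if b then (d i && (i == s i))%:R * 'X else (X i (s i))%:P))); last first.
    by move=> i _; rewrite big_bool /= !mxE addrC.
  rewrite bigA_distr_bigA big_distrr /=.
  over.
rewrite exchange_big /= (bigID (fun f : {ffun 'I_K -> bool} => [forall i, f i ==> d i])) /=.
rewrite [X in _ + X]big1 ?addr0; last first.
  move=> f /forallPn [i]; rewrite negb_imply => /andP[fi ndi].
  apply: big1 => s _; rewrite (bigD1 i) //= fi (negbTE ndi) /= mul0r mul0r mulr0.
  by [].
apply: eq_bigr => f fd.
rewrite /(\det (unitrows X f)) rmorph_sum big_distrr /=.
apply: eq_bigr => s _.
rewrite rmorphM /= rmorph_sign mulrCA; congr (_ * _).
rewrite rmorph_prod [LHS](bigID (fun i => f i)) [in RHS](bigID (fun i => f i)) /=.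
rewrite mulrA; congr (_ * _); last first.
  by apply: eq_bigr => i /negbTE fi; rewrite fi mxE fi.
rewrite (eq_bigr (fun i => (i == s i)%:R%:P * 'X)); last first.
  move=> i fi; move/forallP: fd => /(_ i); rewrite fi /= => -> /=.
  by rewrite rmorph_nat.
rewrite (big_split _ _ _ (fun i => ((i == s i)%:R)%:P) (fun=> 'X)) /= mulrC; congr (_ * _); last first.
  by apply: eq_bigr => i fi; rewrite mxE fi.
rewrite prodr_const; congr (_ ^+ _).
by apply: eq_card => i; rewrite !inE.
Qed.
End Unit.

Section Main.
Variables (R : comNzRingType) (n' : nat).
Local Notation n := n'.+1.
Variable Ph : 'M[R]_n.
Variables (m : nat).

Definition ia (c : m.-tuple 'I_n) (i : 'I_(m+n)) : 'I_n :=
  match split i with inl x => tnth c x | inr y => y end.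
Definition ht r (t : r.-tuple 'I_n) (k : 'I_(m+r)) : 'I_(m+n) :=
  match split k with inl x => lshift n x | inr y => rshift m (tnth t y) end.
Definition ft r (t : r.-tuple 'I_n) := [ffun i => i \notin codom (ht t)].
Definition sf (f : {ffun 'I_(m+n) -> bool}) := [seq y <- enum 'I_n | ~~ f (rshift m y)].
Definition tf r (f : {ffun 'I_(m+n) -> bool}) : r.-tuple 'I_n :=
  insubd [tuple of nseq r ord0] (sf f).
Definition dm (i : 'I_(m+n)) := (m <= i)%N.

Lemma ht_incr r (t : r.-tuple 'I_n) : incr t ->
  forall k l : 'I_(m+r), (k < l)%N -> (ht t k < ht t l)%N.
Proof.
move=> it k l; rewrite /ht.
case: split_ordP => x ->; case: split_ordP => y -> //=.
- by move=> _; have := ltn_ord x; lia.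
- by move=> h; have := ltn_ord y; move: h; lia.
rewrite ltn_add2l => xy.
have := sorted_ltn_nth (@ltord_tr n) ord0 it.
move=> /(_ x y); rewrite /ltord !inE size_tuple !ltn_ord -!tnth_nth.
by rewrite ltn_add2l; apply...
Qed.

Lemma ht_inj r (t : r.-tuple 'I_n) : incr t -> injective (ht t).
Proof.
move=> it x y e; apply: val_inj => /=; case: (ltngtP x y) => // xy.
  by have := ht_incr it xy; rewrite e ltnn.
by have := ht_incr it xy; rewrite e ltnn.
Qed.

Lemma codom_ht_l r (t : r.-tuple 'I_n) x : lshift n x \in codom (ht t).
Proof. by apply/codomP; exists (lshift r x); rewrite /ht (@unsplitK m r (inl x)). Qed.

Lemma codom_ht_r r (t : r.-tuple 'I_n) y : (rshift m y \in codom (ht t)) = (y \in t).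
Proof.
apply/codomP/tnthP => [[k]|[k ->]]; last by exists (rshift m k); rewrite /ht (@unsplitK m r (inr k)).
rewrite /ht; case: split_ordP => z _ /eqP; first by rewrite eq_shift.
by rewrite eq_shift => /eqP ->; exists z.
Qed.

Lemma ia_ht (c : m.-tuple 'I_n) r (t : r.-tuple 'I_n) k :
  ia c (ht t k) = tnth (cat_tuple c t) k.
Proof.
rewrite /ht; case: split_ordP => x kx.
  rewrite /ia (@unsplitK m n (inl x)) kx.
  by rewrite [RHS](tnth_nth (tnth c x)) /= nth_cat size_tuple ltn_ord -tnth_nth.
rewrite /ia (@unsplitK m n (inr (tnth t x))) kx.
rewrite [RHS](tnth_nth (tnth t x)) /= nth_cat size_tuple ltnNge leq_addr /=.
by rewrite addKn -tnth_nth.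
Qed.

Lemma ft_P r (t : r.-tuple 'I_n) : (r <= n)%N -> incr t ->
  [forall i, ft t i ==> dm i] && (#|[set i | ft t i]| == n - r)%N.
Proof.
move=> rn it; apply/andP; split.
  apply/forallP => i; rewrite ffunE /dm; case: (split_ordP i) => x -> /=.
    by rewrite codom_ht_l.
  by rewrite leq_addr implybT.
have e : [set i | ft t i] = ~: [set i in codom (ht t)].
  by apply/setP => i; rewrite !inE ffunE.
have := cardsC [set i in codom (ht t)]; rewrite card_ord cardsE.
rewrite (card_codom (ht_inj it)) card_ord -e => e2.
by apply/eqP; lia.
Qed.

Lemma tf_ft r (t : r.-tuple 'I_n) : incr t -> tf r (ft t) = t.
Proof.
move=> it; apply: val_inj; rewrite /tf val_insubd.
have -> : sf (ft t) = t.
  apply: (irr_sorted_eq (@ltord_tr n) (@ltord_irr n)).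
  - exact: (sorted_filter (@ltord_tr n) _ (sorted_enum_ord n)).
  - exact: it.
  by move=> y; rewrite mem_filter mem_enum andbT ffunE negbK codom_ht_r.
by rewrite size_tuple eqxx.
Qed.

Lemma size_sf r (f : {ffun 'I_(m+n) -> bool}) : (r <= n)%N ->
  [forall i, f i ==> dm i] -> #|[set i | f i]| = (n - r)%N -> size (sf f) = r.
Proof.
move=> rn fd fc.
have u : uniq (sf f) by apply: filter_uniq; apply: enum_uniq.
rewrite -(card_uniqP u).
have -> : #|sf f| = #|[predC [set y : 'I_n | f (rshift m y)]]|.
  by apply: eq_card => y; rewrite mem_filter mem_enum andbT !inE.
have e : [set i | f i] = @rshift m n @: [set y : 'I_n | f (rshift m y)].
  apply/setP => i; rewrite !inE; case: (split_ordP i) => x ->.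
    have := forallP fd (lshift n x); rewrite /dm /= leqNgt ltn_ord implybF => /negbTE ->.
    by apply/esym/imsetP => -[y _ /eqP]; rewrite eq_shift.
  by rewrite (mem_imset _ _ (@rshift_inj m n)) inE.
move: fc; rewrite e card_imset; last exact: rshift_inj.
have := cardC [set y : 'I_n | f (rshift m y)]; rewrite card_ord; lia.
Qed.

Lemma ft_tf r (f : {ffun 'I_(m+n) -> bool}) : (r <= n)%N ->
  [forall i, f i ==> dm i] -> #|[set i | f i]| = (n - r)%N ->
  ft (tf r f) = f /\ incr (tf r f).
Proof.
move=> rn fd fc.
have vt : val (tf r f) = sf f by rewrite /tf val_insubd (size_sf rn fd fc) eqxx.
split; last first.
  rewrite /incr vt; exact: (sorted_filter (@ltord_tr n) _ (sorted_enum_ord n)).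
apply/ffunP => i; rewrite ffunE; case: (split_ordP i) => x ->.
  rewrite codom_ht_l /=.
  by have := forallP fd (lshift n x); rewrite /dm /= leqNgt ltn_ord implybF => /negbTE ->.
rewrite codom_ht_r; have -> : (x \in tf r f) = (x \in sf f) by rewrite -vt.
by rewrite mem_filter mem_enum andbT negbK.
Qed.

Lemma reindex_main r (G : {ffun 'I_(m+n) -> bool} -> R) : (r <= n)%N ->
  \sum_(f : {ffun 'I_(m+n) -> bool} | [forall i, f i ==> dm i] && (#|[set i | f i]| == n - r)%N) G f =
  \sum_(t : r.-tuple 'I_n | incr t) G (ft t).
Proof.
move=> rn; rewrite (reindex_onto (@ft r) (@tf r)); last first.
  by move=> f /andP[fd /eqP fc]; case: (ft_tf rn fd fc).
apply: eq_bigl => t; apply/idP/idP.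
  move=> /andP[/andP[fd /eqP fc] /eqP e]; case: (ft_tf rn fd fc) => _.
  by rewrite e.
by move=> it; rewrite ft_P // tf_ft // eqxx.
Qed.

Definition Xab (a b : m.-tuple 'I_n) : 'M[R]_(m+n) :=
  \matrix_(i, j) Ph (ia a i) (ia b j).
Definition minor s (a b : s.-tuple 'I_n) :=
  \det (\matrix_(k < s, l < s) Ph (tnth a k) (tnth b l)).

Lemma coef_main r (a b : m.-tuple 'I_n) : (r <= n)%N ->
  (\det (map_mx polyC (Xab a b) + \matrix_(i, j) ((dm i && (i == j))%:R * 'X)))`_(n - r)
  = \sum_(t : r.-tuple 'I_n | incr t) minor (cat_tuple a t) (cat_tuple b t).
Proof.
move=> rn; rewrite det_expand coef_sum.
transitivity (\sum_(f : {ffun 'I_(m+n) -> bool} | [forall i, f i ==> dm i] &&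
   (#|[set i | f i]| == n - r)%N) \det (unitrows (Xab a b) f)).
  rewrite big_mkcondr /=; apply: eq_bigr => f _.
  rewrite mulrC coefCM coefXn eq_sym; case: eqP => _; first by rewrite mulr1.
  by rewrite mulr0.
rewrite reindex_main //; apply: eq_bigr => t it.
rewrite (@det_unitrows _ _ _ _ _ _ (ht t) (erefl _) (ht_incr it)); last first.
  by move=> i; rewrite ffunE.
by congr (\det _); apply/matrixP => k l; rewrite !mxE !ia_ht.
Qed.

Definition Pab (a b : m.-tuple 'I_n) : 'M[R]_m := \matrix_(i, j) Ph (tnth a i) (tnth b j).
Definition Qa (a : m.-tuple 'I_n) : 'M[R]_(m, n) := \matrix_(i, j) Ph (tnth a i) j.
Definition Sb (b : m.-tuple 'I_n) : 'M[R]_(n, m) := \matrix_(i, j) Ph i (tnth b j).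

Lemma ia_l (c : m.-tuple 'I_n) x : ia c (lshift n x) = tnth c x.
Proof. by rewrite /ia (@unsplitK m n (inl x)). Qed.
Lemma ia_r (c : m.-tuple 'I_n) y : ia c (rshift m y) = y.
Proof. by rewrite /ia (@unsplitK m n (inr y)). Qed.
Lemma dm_l x : dm (lshift n x) = false.
Proof. by rewrite /dm /= leqNgt ltn_ord. Qed.
Lemma dm_r y : dm (rshift m y) = true.
Proof. by rewrite /dm /= leq_addr. Qed.

Lemma Bt_block (a b : m.-tuple 'I_n) :
  map_mx polyC (Xab a b) + \matrix_(i, j) ((dm i && (i == j))%:R * 'X) =
  block_mx (map_mx polyC (Pab a b)) (map_mx polyC (Qa a)) (map_mx polyC (Sb b))
     ('X%:M + map_mx polyC Ph).
Proof.
apply/matrixP => i j.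
case: (split_ordP i) => x ->; case: (split_ordP j) => y ->.
- by rewrite block_mxEul !mxE !ia_l dm_l /= mul0r addr0.
- by rewrite block_mxEur !mxE ia_l ia_r dm_l /= mul0r addr0.
- by rewrite block_mxEdl !mxE ia_l ia_r eq_shift andbF mul0r addr0.
by rewrite block_mxEdr !mxE !ia_r eq_shift dm_r /= mulr_natl addrC.
Qed.

Section Schur.
Variable I : R -> Prop.
Hypothesis I0 : I 0.
Hypothesis ID : forall x y, I x -> I y -> I (x + y).
Hypothesis IM : forall c x, I x -> I (c * x).
Hypothesis IPhi2 : forall i j, I ((Ph *m Ph) i j).

Definition Ip (q : {poly R}) := forall i, I q`_i.
Lemma Ip0 : Ip 0. Proof. by move=> i; rewrite coef0. Qed.
Lemma IpD p q : Ip p -> Ip q -> Ip (p + q).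
Proof. by move=> hp hq i; rewrite coefD; apply: ID. Qed.
Lemma IpM c q : Ip q -> Ip (c * q).
Proof. by move=> hq i; rewrite coefM; apply: (Isum I0 ID) => j _; apply: IM. Qed.
Lemma IpC c : I c -> Ip c%:P.
Proof. by move=> h i; rewrite coefC; case: eqP. Qed.

Definition Jmx p q (M : 'M[{poly R}]_(p, q)) := forall i j, Ip (M i j).
Lemma Jmx0 p q : Jmx (0 : 'M_(p, q)). Proof. by move=> i j; rewrite mxE; apply: Ip0. Qed.
Lemma JmxD p q (A B : 'M_(p, q)) : Jmx A -> Jmx B -> Jmx (A + B).
Proof. by move=> hA hB i j; rewrite mxE; apply: IpD. Qed.
Lemma JmxN p q (A : 'M_(p, q)) : Jmx A -> Jmx (- A).
Proof. by move=> hA i j; rewrite mxE; apply: (IN IpM). Qed.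
Lemma JmxMr p q s (A : 'M_(p, q)) (B : 'M_(q, s)) : Jmx A -> Jmx (A *m B).
Proof.
move=> hA i j; rewrite mxE; apply: (Isum Ip0 IpD) => k _.
by rewrite mulrC; apply: IpM.
Qed.
Lemma JmxMl p q s (A : 'M_(p, q)) (B : 'M_(q, s)) : Jmx B -> Jmx (A *m B).
Proof.
move=> hB i j; rewrite mxE; apply: (Isum Ip0 IpD) => k _.
by apply: IpM.
Qed.
Lemma JmxZ p q c (A : 'M_(p, q)) : Jmx A -> Jmx (c *: A).
Proof. by move=> hA i j; rewrite mxE; apply: IpM. Qed.
Lemma JmxC p q (M : 'M[R]_(p, q)) : (forall i j, I (M i j)) -> Jmx (map_mx polyC M).
Proof. by move=> h i j; rewrite mxE; apply: IpC. Qed.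
Lemma Jmx_block m1 m2 n1 n2 (A : 'M_(m1, n1)) (B : 'M_(m1, n2)) (C : 'M_(m2, n1))
   (D : 'M_(m2, n2)) : Jmx A -> Jmx B -> Jmx C -> Jmx D -> Jmx (block_mx A B C D).
Proof.
move=> hA hB hC hD i j.
case: (split_ordP i) => x ->; case: (split_ordP j) => y ->.
- by rewrite block_mxEul.
- by rewrite block_mxEur.
- by rewrite block_mxEdl.
by rewrite block_mxEdr.
Qed.

Lemma schur (a b : m.-tuple 'I_n) k :
  I ((\det (map_mx polyC (Xab a b) + \matrix_(i, j) ((dm i && (i == j))%:R * 'X)))`_k
     - \det (Pab a b) * (\det ('X%:M + map_mx polyC Ph))`_k).
Proof.
rewrite Bt_block.
set Pp := map_mx polyC (Pab a b); set Qp := map_mx polyC (Qa a).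
set Sp := map_mx polyC (Sb b); set Fp := map_mx polyC Ph.
set Bb := block_mx _ _ _ _.
pose L := block_mx ((('X : {poly R}) ^+ 2)%:M : 'M_m) (- (Qp *m ('X%:M - Fp))) 0 (1%:M : 'M_n).
have dL : \det L = ('X ^+ 2) ^+ m by rewrite det_ublock det_scalar det1 mulr1.
pose T := block_mx (('X : {poly R}) ^+ 2 *: Pp) 0 Sp ('X%:M + Fp).
have dT : \det T = ('X ^+ 2) ^+ m * ((\det (Pab a b))%:P * \det ('X%:M + Fp)).
  by rewrite det_lblock detZ det_map_mx mulrA.
have JQS : Jmx (Qp *m Sp).
  rewrite -map_mxM; apply: JmxC => i j.
  have -> : (Qa a *m Sb b) i j = (Ph *m Ph) (tnth a i) (tnth b j).
    by rewrite !mxE; apply: eq_bigr => l _; rewrite !mxE.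
  exact: IPhi2.
have JQF : Jmx (Qp *m Fp).
  rewrite -map_mxM; apply: JmxC => i j.
  have -> : (Qa a *m Ph) i j = (Ph *m Ph) (tnth a i) j.
    by rewrite !mxE; apply: eq_bigr => l _; rewrite !mxE.
  exact: IPhi2.
have hc : Jmx (L *m Bb - T).
  rewrite /L /Bb /T mulmx_block opp_block_mx add_block_mx.
  apply: Jmx_block.
  - rewrite mul_scalar_mx addrAC subrr add0r mulNmx.
    apply: JmxN; rewrite mulmxBr mulmxBl mul_mx_scalar -scalemxAl.
    by apply: JmxD; [apply: JmxZ | apply: JmxN; apply: JmxMr].
  - have e : ('X%:M - Fp) *m ('X%:M + Fp) = (('X : {poly R}) ^+ 2)%:M - Fp *m Fp.
      rewrite mulmxDr !mulmxBl !mul_scalar_mx mul_mx_scalar scale_scalar_mx -expr2.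
      by rewrite addrA subrK.
    rewrite oppr0 addr0 mulNmx -mulmxA e mulmxBr mul_scalar_mx mul_mx_scalar.
    rewrite opprB addrC subrK mulmxA.
    exact: JmxMr.
  - by rewrite mul0mx mul1mx add0r subrr; apply: Jmx0.
  by rewrite mul0mx mul1mx add0r subrr; apply: Jmx0.
have hc' : forall i j, Ip ((L *m Bb) i j - T i j).
  by move=> i j; have := hc i j; rewrite !mxE.
have := det_cong Ip0 IpD IpM hc'.
rewrite det_mulmx dL dT -mulrBr -exprM => h.
have {}h : Ip (\det Bb - (\det (Pab a b))%:P * \det ('X%:M + Fp)).
  move=> i; have := h (i + 2 * m)%N; rewrite coefXnM ltnNge leq_addl /= addnK.
  by [].
by have := h k; rewrite coefB coefCM.
Qed.
End Schur.
End Main.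

Lemma minor_nil (R : comNzRingType) n (Ph : 'M[R]_n.+1) r (t : r.-tuple 'I_n.+1) :
  minor Ph (cat_tuple [tuple] t) (cat_tuple [tuple] t) =
  \det (\matrix_(k < r, l < r) Ph (tnth t k) (tnth t l)).
Proof.
rewrite /minor.
have e : forall k : 'I_(0 + r), tnth (cat_tuple [tuple] t) k = tnth t k.
  by move=> k; rewrite !(tnth_nth ord0).
congr (\det _); apply/matrixP => k l; rewrite !mxE.
by rewrite !e.
Qed.

Section Ideal.
Variable R : comPzRingType.
Variable gens : seq R.

Lemma in_ideal0 : in_ideal gens 0.
Proof. by exists [::]; rewrite big1 // => i _; rewrite nth_nil mul0r. Qed.

Lemma in_idealD x y : in_ideal gens x -> in_ideal gens y -> in_ideal gens (x + y).
Proof.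
move=> [c1 ->] [c2 ->]; exists (mkseq (fun i => c1`_i + c2`_i) (size gens)).
by rewrite -big_split; apply: eq_bigr => i _; rewrite nth_mkseq // mulrDl.
Qed.

Lemma in_idealM c x : in_ideal gens x -> in_ideal gens (c * x).
Proof.
move=> [c1 ->]; exists (mkseq (fun i => c * c1`_i) (size gens)).
by rewrite big_distrr; apply: eq_bigr => i _ /=; rewrite nth_mkseq // -mulrA.
Qed.

Lemma in_ideal_gen g : g \in gens -> in_ideal gens g.
Proof.
move=> gin; have hidx : (index g gens < size gens)%N by rewrite index_mem.
exists (mkseq (fun i => (i == index g gens)%:R) (size gens)).
rewrite (bigD1 (Ordinal hidx)) //= big1 ?addr0.
  by rewrite nth_mkseq // eqxx mul1r nth_index.
move=> i ni; rewrite nth_mkseq //.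
have -> : (i == index g gens :> nat) = false.
  by apply/negbTE; apply: contra ni => /eqP e; apply/eqP/val_inj.
by rewrite mul0r.
Qed.
End Ideal.

End Aux.
Import Aux.

Theorem lemma3 (K : fieldType) (n : nat) (hn : (1 <= n)%N)
  (p r : nat) (hp : (1 <= p <= n)%N) (hr : (1 <= r <= p)%N)
  (a b : (p - r).-tuple 'I_n) :
  in_ideal (Jgens K n) (Rel K a b).
Proof.
case: n hn hp a b => // n' _ hp a b.
set I := in_ideal (Jgens K n'.+1).
have I0 : I 0 := @in_ideal0 _ _.
have ID : forall x y, I x -> I y -> I (x + y) := @in_idealD _ _.
have IM : forall c x, I x -> I (c * x) := @in_idealM _ _.
have IPhi2 : forall i j, I ((Phi K n'.+1 *m Phi K n'.+1) i j).
  move=> i j; apply: in_ideal_gen; rewrite mem_cat; apply/orP; right.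
  apply/mapP; exists (i, j); first by rewrite mem_enum.
  by [].
have rn : (r <= n'.+1)%N.
  by move/andP: hr => [_ rp]; move/andP: hp => [_ pn]; apply: leq_trans pn.
have IT : I (Tsum K n'.+1 r).
  apply: in_ideal_gen; rewrite mem_cat; apply/orP; left.
  apply/mapP; exists r; last by [].
  by rewrite mem_iota; move/andP: hr => [r1 _]; rewrite r1 add1n ltnS.
have hs := schur I0 ID IM IPhi2 a b (n'.+1 - r).
rewrite (coef_main _ _ _ rn) in hs.
have hD : (\det ('X%:M + map_mx polyC (Phi K n'.+1)))`_(n'.+1 - r) = Tsum K n'.+1 r.
  have := coef_main (Phi K n'.+1) (m := 0) [tuple] [tuple] rn.
  rewrite Bt_block.
  have -> : map_mx polyC (Qa (Phi K n'.+1) [tuple]) = 0 by apply: flatmx0.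
  rewrite det_lblock det_mx00 mul1r => ->.
  rewrite /Tsum; apply: eq_bigr => t _.
  by rewrite minor_nil.
rewrite hD in hs.
have := ID _ _ hs (IM (\det (Pab (Phi K n'.+1) a b)) _ IT).
rewrite subrK.
by [].
Qed.
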